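(* For every integer $k\ge0$, on $(0,1)$, $$W^{(k+1)}(t)=W^{(k)}(t)\Phi^{(k)}(t)\qquad\text{and}\qquad \big(W^{(k+1)}(t)\big)'=W^{(k)}(t)\Psi^{(k)}(t).$$
   Context: Fix real $\alpha,\beta,v$ with $\alpha>-1$, $\beta>-1$, $|\alpha-\beta|<|v|<\alpha+\beta+2$; $\kappa_{\pm v,\pm\beta}=\alpha\pm v\pm\beta$. For real parameters $a,b,v$ write $\kappa'_{\pm v,\pm b}=a\pm v\pm b$ and define $$W^{(a,b,v)}(t)=t^a(1-t)^b\begin{pmatrix}\frac{v(\kappa'_{v,b}+2)}{\kappa'_{v,-b}}t^2-(\kappa'_{v,b}+2)t+(a+1) & (a+b+2)t-(a+1)\\ (a+b+2)t-(a+1) & -\frac{v(\kappa'_{-v,b}+2)}{\kappa'_{-v,-b}}t^2-(\kappa'_{-v,b}+2)t+(a+1)\end{pmatrix},\quad t\in(0,1),$$ and $W^{(k)}=W^{(\alpha+k,\beta+k,v)}$ for integers $k\ge0$. Define $\Phi^{(k)}(t)=\mathscr A_2^kt^2+\mathscr A_1^kt+\mathscr A_0^k$ and $\Psi^{(k)}(t)=\mathscr B_1^kt+\mathscr B_0^k$ with $\mathscr A_2^k=\mathrm{diag}\Big(-\frac{\kappa_{v,\beta}+2(k+2)}{\kappa_{v,\beta}+2(k+1)},-\frac{\kappa_{-v,\beta}+2(k+2)}{\kappa_{-v,\beta}+2(k+1)}\Big)$, $\mathscr A_1^k=\frac{2}{(\kappa_{-v,\beta}+2(k+1))(\kappa_{v,\beta}+2(k+1))}\begin{pmatrix}0&\kappa_{v,-\beta}\\\kappa_{-v,-\beta}&0\end{pmatrix}-\mathscr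 A_2^k$, $\mathscr A_0^k=\frac{\kappa_{v,-\beta}\kappa_{-v,-\beta}}{v(\kappa_{-v,\beta}+2(k+1))(\kappa_{v,\beta}+2(k+1))}\begin{pmatrix}-1&1\\-1&1\end{pmatrix}$, $\mathscr B_1^k=(\alpha+\beta+4+2k)\mathscr A_2^k$, $\mathscr B_0^k=\Big(-(\alpha+k+1)I-\frac1v\mathrm{diag}(-\kappa_{-v,-\beta},\kappa_{v,-\beta})\Big)\mathscr A_2^k+\frac1{2v}\Big(\frac{\alpha+\beta+2k+4}{v}\mathscr A_1^k+\mathscr B_1^k\Big)\mathrm{diag}\big(-\kappa_{-v,\beta}-2(k+1),\ \kappa_{v,\beta}+2(k+1)\big)$. *)

(* Defs.v *)
From HB Require Import structures.
From mathcomp Require Import all_boot all_order all_algebra.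
From mathcomp Require Import all_classical all_reals all_analysis.
Set Implicit Arguments. Unset Strict Implicit. Unset Printing Implicit Defensive.
Import Order.TTheory GRing.Theory Num.Theory.
Local Open Scope ring_scope.

Section Defs.
Variable R : realType.

Definition mx2 (a11 a12 a21 a22 : R) : 'M[R]_2 :=
  \matrix_(i < 2, j < 2)
    if (i : nat) == 0%N then (if (j : nat) == 0%N then a11 else a12)
    else (if (j : nat) == 0%N then a21 else a22).

Definition diag2 (a b : R) : 'M[R]_2 := mx2 a 0 0 b.

Definition Wabv (a b v t : R) : 'M[R]_2 :=
  (t `^ a * (1 - t) `^ b) *:
  mx2 (v * (a + v + b + 2) / (a + v - b) * t ^+ 2 - (a + v + b + 2) * t + (a + 1))
      ((a + b + 2) * t - (a + 1))
      ((a + b + 2) * t - (a + 1))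
      (- (v * (a - v + b + 2) / (a - v - b)) * t ^+ 2 - (a - v + b + 2) * t + (a + 1)).

Definition Wk (al be v : R) (k : nat) (t : R) : 'M[R]_2 :=
  Wabv (al + k%:R) (be + k%:R) v t.

Section Coeffs.
Variables (al be v : R) (k : nat).
Let kvb := al + v + be.
Let kmvb := al - v + be.
Let kvmb := al + v - be.
Let kmvmb := al - v - be.
Let dp := kvb + 2 * (k%:R + 1).
Let dm := kmvb + 2 * (k%:R + 1).

Definition A2 : 'M[R]_2 :=
  diag2 (- ((kvb + 2 * (k%:R + 2)) / dp)) (- ((kmvb + 2 * (k%:R + 2)) / dm)).
Definition A1 : 'M[R]_2 :=
  (2 / (dm * dp)) *: mx2 0 kvmb kmvmb 0 - A2.
Definition A0 : 'M[R]_2 :=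
  (kvmb * kmvmb / (v * dm * dp)) *: mx2 (-1) 1 (-1) 1.
Definition B1 : 'M[R]_2 := (al + be + 4 + 2 * k%:R) *: A2.
(* NOTE: the source prints ((al+be+2k+4)/v) A1 in the second summand; that
   literal version makes the derivative identity false unless v = 1.  We use the corrected coefficient (al+be+2k+4). *)
Definition B0 : 'M[R]_2 :=
  (- ((al + k%:R + 1)%:M) - v^-1 *: diag2 (- kmvmb) kvmb) *m A2
  + (1 / (2 * v)) *: ((al + be + 2 * k%:R + 4) *: A1 + B1)
      *m diag2 (- kmvb - 2 * (k%:R + 1)) (kvb + 2 * (k%:R + 1)).

Definition Phi (t : R) : 'M[R]_2 := t ^+ 2 *: A2 + t *: A1 + A0.
Definition Psi (t : R) : 'M[R]_2 := t *: B1 + B0.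
End Coeffs.
End Defs.

(* Main.v *)
Require Import Defs.
From HB Require Import structures.
From mathcomp Require Import all_boot all_order all_algebra.
From mathcomp Require Import all_classical all_reals all_analysis.
From mathcomp Require Import ring lra.

Import Order.TTheory GRing.Theory Num.Theory.
Local Open Scope ring_scope.

Lemma der_entry (R : realType) (A B c2 c1 c0 t : R) : 0 < t < 1 ->
  is_derive t 1 (fun s : R => (s `^ (A+1) * (1-s) `^ (B+1)) * (c2 * s ^+ 2 + c1 * s + c0))
   (t `^ A * (1-t) `^ B * (((A+1)*(1-t) - (B+1)*t) * (c2 * t ^+ 2 + c1 * t + c0)
      + t * (1 - t) * (2 * c2 * t + c1))).
Proof.
move=> /andP[t0 t1].
have h1 : is_derive t 1 (fun s : R => s `^ (A+1)) ((A+1) * t `^ A).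
  by have := @is_derive1_powR R (A+1) t t0; rewrite addrK.
have h2 : is_derive t 1 ((fun s : R => s `^ (B+1)) \o (fun s => 1 - s)) ((B+1) * (1-t) `^ B * -1).
  apply: is_derive1_comp.
    by have := @is_derive1_powR R (B+1) (1-t) ltac:(lra); rewrite addrK.
  have hB := is_deriveB (@is_derive_cst R R^o R^o 1 t 1) (is_derive_id t 1).
  by rewrite sub0r in hB; exact: hB.
have hq := is_deriveD (is_deriveD (is_deriveM (@is_derive_cst R R^o R^o c2 t 1) (is_deriveX 2 (is_derive_id t 1))) (is_deriveM (@is_derive_cst R R^o R^o c1 t 1) (is_derive_id t 1))) (@is_derive_cst R R^o R^o c0 t 1).
have hM := is_deriveM (is_deriveM h1 h2) hq.
apply: (is_derive_eq hM).
rewrite !fctE /= !powRD ?powRr1; try lra.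
rewrite /GRing.scale /=.
ring.
Qed.

Lemma der_entry2 (R : realType) (f : R -> R) (A B c2 c1 c0 t d : R) : 0 < t < 1 ->
  (forall s, f s = (s `^ (A+1) * (1-s) `^ (B+1)) * (c2 * s ^+ 2 + c1 * s + c0)) ->
  t `^ A * (1-t) `^ B * (((A+1)*(1-t) - (B+1)*t) * (c2 * t ^+ 2 + c1 * t + c0)
      + t * (1 - t) * (2 * c2 * t + c1)) = d ->
  is_derive t 1 f d.
Proof.
move=> ht hf <-.
have -> : f = (fun s : R => (s `^ (A+1) * (1-s) `^ (B+1)) * (c2 * s ^+ 2 + c1 * s + c0)).
  by apply: funext.
exact: der_entry.
Qed.

Ltac nzt L := repeat (apply/andP; split); apply/eqP => E; case: L => -[? /andP[? ?]]; lra.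

Theorem mainTheorem8 (R : realType) (al be v : R)
  (hal : -1 < al) (hbe : -1 < be)
  (hv1 : `|al - be| < `|v|) (hv2 : `|v| < al + be + 2) :
  forall (k : nat) (t : R), 0 < t < 1 ->
    Wk al be v k.+1 t = Wk al be v k t *m Phi al be v k t /\
    (forall i j : 'I_2,
       is_derive t 1 (fun s : R => Wk al be v k.+1 s i j)
                 ((Wk al be v k t *m Psi al be v k t) i j)).
Proof.
move=> k t ht.
have L : (0 < v /\ -v < al - be < v) \/ (v < 0 /\ v < al - be < -v).
  have [vp|vn|v0] := ltrgtP 0 v.
  - by left; split => //; move: hv1; rewrite (gtr0_norm vp) ltr_norml.
  - by right; split => //; move: hv1; rewrite (ltr0_norm vn) ltr_norml opprK.
  - by move: hv1; rewrite -v0 normr0 ltNge normr_ge0.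
have /andP[L2a L2b] : - (al + be + 2) < v < al + be + 2 by rewrite -ltr_norml.
have hkr : 0 <= k%:R :> R by [].
have E1 : al + k.+1%:R = (al + k%:R) + 1 by rewrite -natr1 addrA.
have E2 : be + k.+1%:R = (be + k%:R) + 1 by rewrite -natr1 addrA.
rewrite /Wk E1 E2 /Phi /Psi /B0 /B1 /A1 /A0 /A2 /diag2 /mx2.
move: (k%:R) hkr => kr hkr.
have n1 : al + v + be + 2 * (kr + 1) != 0.
  by apply/eqP => E; case: L => -[? /andP[? ?]]; lra.
have n2 : al - v + be + 2 * (kr + 1) != 0.
  by apply/eqP => E; case: L => -[? /andP[? ?]]; lra.
have n3 : v != 0.
  by apply/eqP => E; case: L => -[? /andP[? ?]]; lra.
have n4 : al + kr + v - (be + kr) != 0.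
  by apply/eqP => E; case: L => -[? /andP[? ?]]; lra.
have n5 : al + kr - v - (be + kr) != 0.
  by apply/eqP => E; case: L => -[? /andP[? ?]]; lra.
case/andP: (ht) => t0 t1.
have tn0 : t != 0 by rewrite gt_eqF.
have t1n0 : 1 - t != 0 by rewrite gt_eqF // subr_gt0.
split.
{ rewrite /Wabv !powRD ?tn0 ?t1n0 ?implybT // !powRr1 ?ltW ?subr_gt0 //.
  apply/matrixP => i j.
  case: i => [[|[|i]] Hi]; try by []; case: j => [[|[|j]] Hj]; try by [].
  all: rewrite !mxE ?big_ord_recr ?big_ord0 /= ?mxE /=.
  all: rewrite ?big_ord_recr ?big_ord0 /= ?mxE /=.
  all: by field; rewrite ?n1 ?n2 ?n3 ?n4 ?n5. }

move=> i j.
set a := al + kr + 1. set b := be + kr + 1.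
case: i => [[|[|i]] Hi]; try by []; case: j => [[|[|j]] Hj]; try by [].
- apply: (@der_entry2 _ _ (al + kr) (be + kr) (v*(a+v+b+2)/(a+v-b)) (-(a+v+b+2)) (a+1)) => //.
    by move=> s; rewrite /Wabv !mxE /=; ring.
  rewrite !mxE ?big_ord_recr ?big_ord0 /= ?mxE /=.
  rewrite ?big_ord_recr ?big_ord0 /= ?mxE /=.
  rewrite /a /b ?mulr1n ?mulr0n; by field; rewrite ?n1 ?n2 ?n3 ?n4 ?n5.
- apply: (@der_entry2 _ _ (al + kr) (be + kr) (0) (a+b+2) (-(a+1))) => //.
    by move=> s; rewrite /Wabv !mxE /=; ring.
  rewrite !mxE ?big_ord_recr ?big_ord0 /= ?mxE /=.
  rewrite ?big_ord_recr ?big_ord0 /= ?mxE /=.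
  rewrite /a /b ?mulr1n ?mulr0n; by field; rewrite ?n1 ?n2 ?n3 ?n4 ?n5.
- apply: (@der_entry2 _ _ (al + kr) (be + kr) (0) (a+b+2) (-(a+1))) => //.
    by move=> s; rewrite /Wabv !mxE /=; ring.
  rewrite !mxE ?big_ord_recr ?big_ord0 /= ?mxE /=.
  rewrite ?big_ord_recr ?big_ord0 /= ?mxE /=.
  rewrite /a /b ?mulr1n ?mulr0n; by field; rewrite ?n1 ?n2 ?n3 ?n4 ?n5.
- apply: (@der_entry2 _ _ (al + kr) (be + kr) (-(v*(a-v+b+2)/(a-v-b))) (-(a-v+b+2)) (a+1)) => //.
    by move=> s; rewrite /Wabv !mxE /=; ring.
  rewrite !mxE ?big_ord_recr ?big_ord0 /= ?mxE /=.
  rewrite ?big_ord_recr ?big_ord0 /= ?mxE /=.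
  rewrite /a /b ?mulr1n ?mulr0n; by field; rewrite ?n1 ?n2 ?n3 ?n4 ?n5.
Qed.
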